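(* Let $G=(V,E)$ be an undirected graph, $X\subset V$, $Y=V\setminus X$, $f\in L^\infty(X)$, $g\in L^\infty(Y)$, and let $u:V\to\mathbb{R}$ satisfy $\Delta_\infty u(x)=f(x)$ for all $x\in X$ and $u=g$ on $Y$. Let $x\in X$ and $y\sim x$. Then for every positive integer $N$ with $N\le d(Y,x)$, \[ u(y)-u(x)\ \le\ \frac{u(x)-\inf_V u}{N}+\frac{(N+1)\sup_X f}{2}. \]
   Context: For $x,y\in V$ write $x\sim y$ if $\{x,y\}\in E$; $d(Y,x)$ is the combinatorial distance, i.e. the least length $n$ of a path $Y\ni x_0\sim\cdots\sim x_n=x$. The discrete infinity Laplacian is $\Delta_\infty u(x)=\inf_{z\sim x}u(z)+\sup_{z\sim x}u(z)-2u(x)$. *)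

(* Defs.v *)
From mathcomp Require Import all_boot all_order all_algebra.
From mathcomp Require Import all_classical all_reals.
From mathcomp Require Export ereal.
Set Implicit Arguments. Unset Strict Implicit. Unset Printing Implicit Defensive.
Import Order.TTheory GRing.Theory Num.Theory.
Local Open Scope classical_set_scope.
Local Open Scope ring_scope.
Local Open Scope ereal_scope.

(* A graph on vertex type V is given by its adjacency relation adj
   (x ~ y  iff  adj x y); undirected simple graph = symmetric, irreflexive. *)
Definition undirected_simple {V : Type} (adj : V -> V -> Prop) : Prop :=
  (forall x y, adj x y -> adj y x) /\ (forall x, ~ adj x x).

Definition nbr_vals {R : realType} {V : Type} (adj : V -> V -> Prop)
  (u : V -> R) (x : V) : set (\bar R) :=
  [set (u z)%:E | z in [set z | adj x z]].

Definition inf_laplacian {R : realType} {V : Type} (adj : V -> V -> Prop)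
  (u : V -> R) (x : V) : \bar R :=
  ereal_inf (nbr_vals adj u x) + ereal_sup (nbr_vals adj u x)
  - (2 * u x)%:E.

Inductive walk {V : Type} (adj : V -> V -> Prop) : nat -> V -> V -> Prop :=
| walk0 a : walk adj 0 a a
| walkS n a b c : walk adj n a b -> adj b c -> walk adj n.+1 a c.

(* N <= d(Y,x), where d(Y,x) is the least length of a path from Y to x
   (d(Y,x) = +oo when there is no such path). *)
Definition dist_ge {V : Type} (adj : V -> V -> Prop) (Y : set V) (x : V)
  (N : nat) : Prop :=
  forall n x0, Y x0 -> walk adj n x0 x -> (N <= n)%N.

Definition bounded_on {R : realType} {V : Type} (A : set V) (h : V -> R) : Prop :=
  exists M : R, forall z, A z -> (`|h z| <= M)%R.

(* Main.v *)
Require Import Defs.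
From mathcomp Require Import all_boot all_order all_algebra.
From mathcomp Require Import all_classical all_reals.
From mathcomp Require Import ring lra.
Import Order.TTheory GRing.Theory Num.Theory.
Local Open Scope classical_set_scope.
Local Open Scope ring_scope.

Lemma walk_cons {V : Type} (adj : V -> V -> Prop) n a b c :
  walk adj n b c -> adj a b -> walk adj n.+1 a c.
Proof.
move=> w; elim: w a => [b0|m b0 d c' w IH e] a h.
  by apply: walkS (walk0 _ _) h.
by apply: walkS (IH _ h) e.
Qed.

Lemma step_lem (R : realType) (V : Type) (adj : V -> V -> Prop)
  (X : set V) (f u : V -> R) :
  (forall x, X x -> inf_laplacian adj u x = (f x)%:E) ->
  forall w z (eps : R), X w -> adj w z -> 0 < eps ->
  exists z', adj w z' /\ u z' < 2 * u w - u z + f w + eps.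
Proof.
move=> hL w z eps Xw wz e0.
have := hL w Xw; rewrite /inf_laplacian.
set L := nbr_vals adj u w => H.
have Lz : L (u z)%:E by exists z.
have hsup : ((u z)%:E <= ereal_sup L)%E by apply: ereal_sup_ubound.
have hinf : (ereal_inf L <= (u z)%:E)%E by apply: ereal_inf_lbound.
suff : (ereal_inf L < (2 * u w - u z + f w + eps)%:E)%E.
  move/ereal_inf_lt => [y [z' az' <-]]; rewrite lte_fin => lt.
  by exists z'.
move: H hinf hsup; case: (ereal_inf L) => [r| |] //.
case: (ereal_sup L) => [s| |] //.
  move=> H0 _; have H : r + s - 2 * u w = f w. by apply/eqP; rewrite -eqe -H0 EFinB EFinD.
  rewrite !lee_fin lte_fin => hs; lra.
Qed.

Theorem lemma3p1 (R : realType) (V : Type) (adj : V -> V -> Prop)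
  (X : set V) (f g u : V -> R) :
  undirected_simple adj ->
  bounded_on X f -> bounded_on (~` X) g ->
  (forall x, X x -> inf_laplacian adj u x = (f x)%:E) ->
  (forall y, (~` X) y -> u y = g y) ->
  forall (x y : V), X x -> adj x y ->
  forall N : nat, (0 < N)%N -> dist_ge adj (~` X) x N ->
  ((u y - u x)%:E <=
     ((u x)%:E - ereal_inf [set (u v)%:E | v in [set: V]]) * (N%:R^-1)%:E
     + ((N.+1)%:R / 2)%:E * ereal_sup [set (f z)%:E | z in X])%E.
Proof.
move=> [sym _] [M hM] _ hL _ x y Xx xy N N0 hd.
set S := ereal_sup _.
have hS1 : (S <= M%:E)%E.
  apply: ge_ereal_sup => _ [z Xz <-]; rewrite lee_fin.
  exact: le_trans (ler_norm _) (hM z Xz).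
have hS2 : ((f x)%:E <= S)%E by apply: ereal_sup_ubound; exists x.
have [s Ss hs] : exists2 s, S = s%:E & forall z, X z -> f z <= s.
  move: hS1 hS2; case E: S => [s| |] // _ _; exists s => // z Xz.
  rewrite -lee_fin -E; apply: ereal_sup_ubound; by exists z.
rewrite Ss.
set d := u y - u x.
have claim : forall eps, 0 < eps -> forall k, (k <= N)%N ->
  exists p q, [/\ adj q p, walk adj k q x,
    d - k%:R * (s + eps) <= u p - u q &
    k%:R * d - (s + eps) * (k%:R * (k%:R + 1)) / 2 <= u x - u q].
  move=> eps e0; elim => [|k IH] kN.
    exists y, x; split => //; first exact: walk0.
      by rewrite mulr0n /d; lra.
    by rewrite mulr0n /d; lra.
  have [p [q [qp wq h1 h2]]] := IH (ltnW kN).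
  have Xq : X q.
    apply: contrapT => nXq.
    by have := hd _ _ nXq wq; rewrite leqNgt kN.
  have [q' [qq' hq']] := @step_lem _ _ _ _ _ _ hL q p eps Xq qp e0.
  exists q, q'; split.
  - exact: sym.
  - exact: walk_cons wq (sym _ _ qq').
  - have := hs q Xq; rewrite -addn1 natrD; lra.
  - have := hs q Xq; rewrite -addn1 natrD; nra.
have key : forall eps, 0 < eps -> exists q,
    N%:R * d - (s + eps) * (N%:R * (N%:R + 1)) / 2 <= u x - u q.
  move=> eps e0; have [p [q [_ _ _ h]]] := claim eps e0 N (leqnn N).
  by exists q.
have hinf : forall q, (ereal_inf [set (u v)%:E | v in [set: V]] <= (u q)%:E)%E.
  by move=> q; apply: ereal_inf_lbound; exists q.
have n0 : 0 < N%:R :> R by rewrite ltr0n.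
case E: (ereal_inf _) hinf => [m| |] hinf.
- have hm : forall q, m <= u q by move=> q; have := hinf q; rewrite lee_fin.
  rewrite -EFinB -!EFinM -EFinD lee_fin.
  apply/ler_addgt0Pr => e e0.
  rewrite -[N.+1]addn1 natrD.
  set n := N%:R : R.
  have n1 : n + 1 != 0 by rewrite gt_eqF // ltr_wpDr.
  have e2 : 0 < 2 * e / (n + 1) by rewrite divr_gt0 ?mulr_gt0 // ltr_wpDr.
  have [q hq] := key _ e2.
  have eq1 : (s + 2 * e / (n + 1)) * (n * (n + 1)) / 2 = s * (n * (n + 1)) / 2 + e * n.
    by field.
  have eq2 : n * ((u x - m) * n^-1 + (n + 1) / 2 * s + e) = (u x - m) + s * (n * (n + 1)) / 2 + e * n.
    by field; rewrite gt_eqF.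
  rewrite -(ler_pM2l n0) eq2.
  have := hm q; rewrite eq1 in hq; lra.
- by have := hinf x.
- rewrite /= gt0_mulye ?lte_fin ?invr_gt0 //.
  by rewrite addye ?leey.
Qed.
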